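(* For $\mathbf b=\mathbf b_1+i\mathbf b_2\in\mathbb B^{n+1}_{\mathbb C}$ (with $\mathbf b_1,\mathbf b_2\in\mathbb R^{n+1}$), let $\Phi_{\mathbf b}:\mathbb B^{2n+2}\to\mathbb B^{2n+2}$ be $$\Phi_{\mathbf b}(\mathbf z)=\sqrt{1-|\mathbf b|^2}\,\frac{\mathbf z}{1+\bar{\mathbf b}\cdot\mathbf z}+\frac{1}{1+\sqrt{1-|\mathbf b|^2}}\Big(1+\frac{\sqrt{1-|\mathbf b|^2}}{1+\bar{\mathbf b}\cdot\mathbf z}\Big)\mathbf b,$$ where $\bar{\mathbf b}\cdot\mathbf z=\sum_j\bar b_jz_j$. Then: (1) $\Phi_{\mathbf b}$ extends to a $J_{\mathbb R}$-holomorphic diffeomorphism $\bar\Phi_{\mathbf b}:\bar{\mathbb B}^{2n+2}\to\bar{\mathbb B}^{2n+2}$. (2) At points of $\partial\mathbb B^{2n+2}$, $\bar\Phi_{\mathbf b}^*dr=W_{\mathbf b}\,dr$ and $\bar\Phi_{\mathbf b}^*\theta=W_{\mathbf b}\,\theta$, where, writing $\mathbf z=\mathbf x+i\mathbf y$, $$W_{\mathbf b}(\mathbf x,\mathbf y)=\frac{1-|\mathbf b_1|^2-|\mathbf b_2|^2}{(1+\mathbf b_1\cdot\mathbf x+\mathbf b_2\cdot\mathbf y)^2+(\mathbf b_2\cdot\mathbf x-\mathbf b_1\cdot\mathbf y)^2}.$$ (3) At points of $\partial\mathbb B^{2n+2}$, $$\bar\Phi_{\mathbf b}^*d\theta=W_{\mathbf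 b}\,d\theta+2(W_{\mathbf b}-W_{\mathbf b}^2)\,r\,dr\wedge\theta+dW_{\mathbf b}\wedge\theta+dr\wedge(dW_{\mathbf b}\circ J_{\mathbb R}).$$
   Context: Identify $\mathbb R^{2n+2}=\mathbb R^{n+1}_{\mathbf x}\times\mathbb R^{n+1}_{\mathbf y}$ with $\mathbb C^{n+1}$ via $\mathbf z=\mathbf x+i\mathbf y$, and the open unit ball $\mathbb B^{2n+2}$ with the complex unit ball $\mathbb B^{n+1}_{\mathbb C}$. $J_{\mathbb R}$ is the complex structure with $J_{\mathbb R}(\partial_{x_j})=-\partial_{y_j}$, $J_{\mathbb R}(\partial_{y_j})=\partial_{x_j}$; a map $\Phi$ is $J_{\mathbb R}$-holomorphic if $J_{\mathbb R}\circ D\Phi=D\Phi\circ J_{\mathbb R}$. $r=|\mathbf z|$, and $\theta=r^{-2}\sum_j(x_j\,dy_j-y_j\,dx_j)$ on $\mathbb R^{2n+2}\setminus\{0\}$ (equivalently $\theta=\frac1r dr\circ J_{\mathbb R}$). The exterior derivative convention is $d\beta(X,Y)=X(\beta(Y))-Y(\beta(X))-\beta([X,Y])$. Pullbacks are of forms on $\mathbb R^{2n+2}$ evaluated at boundary points (not restricted to the sphere). *)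

(* Defs.v *)
From HB Require Import structures.
From mathcomp Require Import all_boot all_order all_algebra.
From mathcomp Require Import all_classical all_reals.
From mathcomp Require Import topology normedtype derive.
Set Implicit Arguments. Unset Strict Implicit. Unset Printing Implicit Defensive.
Import Order.TTheory GRing.Theory Num.Theory.
Import numFieldNormedType.Exports.
Local Open Scope classical_set_scope.
Local Open Scope ring_scope.

Section Defs.
Variable R : realType.
Variable n : nat.

(* A point of R^{2n+2} = R^{n+1}_x * R^{n+1}_y, identified with z = x + i y in C^{n+1}. *)
Definition pt := ('rV[R]_n.+1 * 'rV[R]_n.+1)%type.

Definition dotv (u v : 'rV[R]_n.+1) : R := \sum_(j < n.+1) u 0 j * v 0 j.

Definition sqn (p : pt) : R := dotv p.1 p.1 + dotv p.2 p.2.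
Definition rr (p : pt) : R := Num.sqrt (sqn p).

Definition uopen_ball : set pt := [set p | sqn p < 1].
Definition uclosed_ball : set pt := [set p | sqn p <= 1].
Definition usphere : set pt := [set p | sqn p = 1].

(* Complex scalars as pairs (Re, Im). *)
Definition cmul (a c : R * R) : R * R := (a.1 * c.1 - a.2 * c.2, a.1 * c.2 + a.2 * c.1).
Definition cadd (a c : R * R) : R * R := (a.1 + c.1, a.2 + c.2).
Definition cinv (a : R * R) : R * R :=
  (a.1 / (a.1 ^+ 2 + a.2 ^+ 2), - a.2 / (a.1 ^+ 2 + a.2 ^+ 2)).
Definition creal (t : R) : R * R := (t, 0).
(* complex scalar times complex vector: c * (x + i y) *)
Definition cscale (c : R * R) (p : pt) : pt :=
  (c.1 *: p.1 - c.2 *: p.2, c.1 *: p.2 + c.2 *: p.1).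
(* \bar b . z = sum_j conj(b_j) z_j *)
Definition cdotbar (b z : pt) : R * R :=
  \big[cadd/(0, 0)]_(j < n.+1) cmul (b.1 0 j, - b.2 0 j) (z.1 0 j, z.2 0 j).

Definition Phi (b : pt) (z : pt) : pt :=
  let s := Num.sqrt (1 - sqn b) in
  let w := cadd (creal 1) (cdotbar b z) in
  cscale (cmul (creal s) (cinv w)) z +
  cscale (cmul (creal (1 / (1 + s))) (cadd (creal 1) (cmul (creal s) (cinv w)))) b.

Definition Wb (b : pt) (p : pt) : R :=
  (1 - dotv b.1 b.1 - dotv b.2 b.2) /
  ((1 + dotv b.1 p.1 + dotv b.2 p.2) ^+ 2 + (dotv b.2 p.1 - dotv b.1 p.2) ^+ 2).

(* Complex structure J_R: J(d/dx_j) = - d/dy_j, J(d/dy_j) = d/dx_j,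
   so J(u, v) = (v, - u) on tangent vectors (u along x, v along y). *)
Definition JR (X : pt) : pt := (X.2, - X.1).

(* 1-forms (as functions point -> tangent vector -> R) *)
Definition dr (p : pt) (X : pt) : R := (dotv p.1 X.1 + dotv p.2 X.2) / rr p.
Definition theta (p : pt) (X : pt) : R :=
  (dotv p.1 X.2 - dotv p.2 X.1) / (rr p ^+ 2).

Definition dfun (f : pt -> R) (p : pt) (X : pt) : R := derive f p X.

(* exterior derivative of a 1-form, convention
   d beta(X,Y) = X(beta(Y)) - Y(beta(X)) - beta([X,Y]) with constant vector fields *)
Definition dform1 (a : pt -> pt -> R) (p : pt) (X Y : pt) : R :=
  derive (fun q => a q Y) p X - derive (fun q => a q X) p Y.

Definition wedge (a c : pt -> pt -> R) (p : pt) (X Y : pt) : R :=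
  a p X * c p Y - a p Y * c p X.

Definition pull1 (F : pt -> pt) (a : pt -> pt -> R) (p : pt) (X : pt) : R :=
  a (F p) ('d F p X).
Definition pull2 (F : pt -> pt) (a : pt -> pt -> pt -> R) (p : pt) (X Y : pt) : R :=
  a (F p) ('d F p X) ('d F p Y).

Fixpoint Ck (k : nat) (U : set pt) (f : pt -> pt) : Prop :=
  match k with
  | 0%N => forall p, U p -> {for p, continuous f}
  | k'.+1 => (forall p, U p -> differentiable f p) /\
             (forall v : pt, Ck k' U (fun q => derive f q v))
  end.
Definition smooth_on (U : set pt) (f : pt -> pt) : Prop := forall k, Ck k U f.

Definition JR_holomorphic_at (F : pt -> pt) (p : pt) : Prop :=
  forall X : pt, JR ('d F p X) = 'd F p (JR X).

Definition uclosed_ball_diffeo (F : pt -> pt) : Prop :=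
  (exists U : set pt, open U /\ uclosed_ball `<=` U /\ smooth_on U F) /\
  (forall p, uclosed_ball p -> uclosed_ball (F p)) /\
  exists G : pt -> pt,
    (exists U : set pt, open U /\ uclosed_ball `<=` U /\ smooth_on U G) /\
    (forall q, uclosed_ball q -> uclosed_ball (G q)) /\
    (forall p, uclosed_ball p -> G (F p) = p) /\
    (forall q, uclosed_ball q -> F (G q) = q).

End Defs.

(* Main.v *)
Require Import Defs.
From HB Require Import structures.
From mathcomp Require Import all_boot all_order all_algebra.
From mathcomp Require Import all_classical all_reals.
From mathcomp Require Import topology normedtype landau derive.
From mathcomp Require Import ring lra.
Import Order.TTheory GRing.Theory Num.Theory.
Import numFieldNormedType.Exports.
Local Open Scope classical_set_scope.
Local Open Scope ring_scope.
Set Implicit Arguments. Unset Strict Implicit. Unset Printing Implicit Defensive.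

Section NearEq.
Variables (R : realType) (V W : normedModType R).

Lemma near_eq_differentiable (f g : V -> W) (p : V) :
  {near p, f =1 g} -> differentiable f p -> differentiable g p.
Proof.
move=> fg df.
pose h := g - f.
have hp : h p = 0 by rewrite /h !fctE (nbhs_singleton fg) subrr.
have hlo : forall eps : R, 0 < eps -> \forall x \near (0:V), `|(h \o shift p) x| <= eps * `|(@id V) x|.
  move=> eps eps0.
  have fg0 : \forall z \near (0:V), f (z + (p - 0)) = g (z + (p - 0)).
    by rewrite -(near_shift 0 p (fun x => f x = g x)).
  apply: filterS fg0 => y /=; rewrite subr0 => e.
  have -> : h (y + p) = 0 by rewrite /h !fctE e subrr.
  rewrite normr0; apply: mulr_ge0 => //; exact: ltW.
have dh : differentiable h p.
  have hdiff0 : h \o shift p = cst (h p) + (0 : V -> W) +o_ 0 id.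
    apply/eqaddoP => eps eps0; apply: filterS (hlo eps eps0) => y /=.
    have -> : (h \o +%R^~ p - (cst (h p) + 0)) y = h (y + p) by rewrite hp /= !fctE /=; rewrite [0 y]/(0 : W) addr0 subr0.
    by [].
  have d0 : 'd h p = 0 :> (V -> W).
    by apply/diff_unique => //; exact: cst_continuous.
  apply/diff_locallyP; rewrite d0; split; first exact: cst_continuous.
  by rewrite hdiff0.
have -> : g = f + h by rewrite /h addrC subrK.
exact: differentiableD.
Unshelve. all: by end_near. Qed.

End NearEq.

Section SSdef.
Variables (R : realType) (V : normedModType R).

Fixpoint SS (k : nat) (U : set V) (f : V -> R) : Prop :=
  match k with
  | 0%N => forall p, U p -> {for p, continuous f}
  | k'.+1 => (forall p, U p -> differentiable f p) /\
             (forall v, SS k' U (fun q => derive f q v))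
  end.

Lemma open_near (U : set V) p : open U -> U p -> \forall q \near p, U q.
Proof. by move=> oU Up; apply: open_nbhs_nbhs; split. Qed.

Lemma SS_ext k U f g : open U -> (forall q, U q -> f q = g q) -> SS k U f -> SS k U g.
Proof.
move=> oU; elim: k f g => [|k IH] f g fg /=.
  move=> cf p Up.
  have nfg : {near p, f =1 g}.
    by apply: filterS (open_near oU Up) => q /fg.
  move: (cf p Up) => cf'; have h2 := cvg_trans (near_eq_cvg nfg) cf'; rewrite (fg p Up) in h2; exact: h2.
move=> [df dd]; split.
  move=> p Up; apply: near_eq_differentiable (df p Up).
  by apply: filterS (open_near oU Up) => q /fg.
move=> v; apply: (IH _ _ _ (dd v)) => q Uq.
apply: near_eq_derive.
by apply: filterS (open_near oU Uq) => r /fg.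
Qed.

Lemma SS_mono k U f : SS k.+1 U f -> SS k U f.
Proof.
elim: k f => [|k IH] f /=.
  by move=> [df _] p Up; apply: differentiable_continuous; exact: df.
by move=> [df dd]; split => // v; apply: IH; exact: dd.
Qed.

Lemma SS_diff k U f p : SS k.+1 U f -> U p -> differentiable f p.
Proof. by move=> [df _]; exact: df. Qed.

Lemma SS_cst k U c : SS k U (fun _ => c).
Proof.
elim: k c => [|k IH] c /=.
  by move=> p _; exact: cst_continuous.
split=> [p _|v]; first exact: differentiable_cst.
have -> : (fun q => derive (fun _ : V => c) q v) = (fun _ => 0).
  by apply: funext => q; exact: derive_cst.
exact: IH.
Qed.

Lemma SS_lin k U f : (forall p, differentiable f p) ->
  (forall v, exists c, forall q, derive f q v = c) -> SS k U f.
Proof.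
case: k => [|k] df dc /=.
  by move=> p _; apply: differentiable_continuous.
split=> [p _|v]; first exact: df.
have [c hc] := dc v.
have -> : (fun q => derive f q v) = (fun _ => c) by apply: funext => q.
exact: SS_cst.
Qed.

Lemma SS_add k U f g : open U -> SS k U f -> SS k U g -> SS k U (fun q => f q + g q).
Proof.
move=> oU; elim: k f g => [|k IH] f g /=.
  move=> cf cg p Up; apply: continuousD; [exact: cf | exact: cg].
move=> [df ddf] [dg ddg]; split.
  move=> p Up; exact: (differentiableD (df p Up) (dg p Up)).
move=> v; apply: (SS_ext oU (f := fun q => derive f q v + derive g q v)).
  move=> q Uq; symmetry; apply: deriveD; apply: diff_derivable; by [apply: df|apply: dg].
exact: IH.
Qed.

Lemma SS_mul k U f g : open U -> SS k U f -> SS k U g -> SS k U (fun q => f q * g q).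
Proof.
move=> oU; elim: k f g => [|k IH] f g /=.
  move=> cf cg p Up; apply: continuousM; [exact: cf | exact: cg].
move=> [df ddf] [dg ddg]; split.
  move=> p Up; exact: (differentiableM (df p Up) (dg p Up)).
move=> v.
apply: (SS_ext oU (f := fun q => f q * derive g q v + g q * derive f q v)).
  move=> q Uq; symmetry; apply: deriveM; apply: diff_derivable; by [apply: df|apply: dg].
apply: SS_add => //; apply: IH => //; apply: SS_mono; by split.
Qed.

Lemma SS_scale k U c f : open U -> SS k U f -> SS k U (fun q => c * f q).
Proof. by move=> oU sf; apply: SS_mul => //; exact: SS_cst. Qed.

Lemma SS_opp k U f : open U -> SS k U f -> SS k U (fun q => - f q).
Proof.
move=> oU sf; apply: (SS_ext oU (f := fun q => -1 * f q)); last exact: SS_scale.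
by move=> q _; rewrite mulN1r.
Qed.

Lemma SS_sub k U f g : open U -> SS k U f -> SS k U g -> SS k U (fun q => f q - g q).
Proof. by move=> oU sf sg; apply: SS_add => //; exact: SS_opp. Qed.

Lemma SS_sum k U (I : Type) (r : seq I) (F : I -> V -> R) : open U ->
  (forall i, SS k U (F i)) -> SS k U (fun q => \sum_(i <- r) F i q).
Proof.
move=> oU sF; elim: r => [|i r IH].
  have -> : (fun q => \sum_(i <- [::]) F i q) = (fun _ => 0).
    by apply: funext => q; rewrite big_nil.
  exact: SS_cst.
have -> : (fun q => \sum_(j <- i :: r) F j q) = (fun q => F i q + \sum_(j <- r) F j q).
  by apply: funext => q; rewrite big_cons.
exact: SS_add.
Qed.

Lemma SS_inv k U f : open U -> (forall q, U q -> f q != 0) -> SS k U f ->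
  SS k U (fun q => (f q)^-1).
Proof.
move=> oU nz; elim: k f nz => [|k IH] f nz /=.
  move=> cf p Up; apply: cvgV; [exact: nz | exact: cf].
move=> [df ddf]; split.
  move=> p Up; apply: differentiableV; [exact: df | exact: nz].
move=> v.
apply: (SS_ext oU (f := fun q => - ((f q)^-1 * (f q)^-1) * derive f q v)).
  move=> q Uq; rewrite deriveV; first by rewrite -exprVn expr2.
    exact: nz.
  apply: diff_derivable; exact: df.
apply: SS_mul => //; apply: SS_opp => //; apply: SS_mul => //;
  apply: IH => //; apply: SS_mono; by split.
Qed.

End SSdef.

Section HDdef.
Variables (R : realType) (V : normedModType R).

Definition HD (f : V -> R) (p X : V) (d : R) := differentiable f p /\ derive f p X = d.

Lemma HD_cst c p X : HD (fun _ => c) p X 0.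
Proof. split; [exact: differentiable_cst | exact: derive_cst]. Qed.

Lemma HD_add f g p X a c : HD f p X a -> HD g p X c -> HD (fun q => f q + g q) p X (a + c).
Proof.
move=> [df ha] [dg hc]; split; first exact: differentiableD.
rewrite -ha -hc; apply: deriveD; exact: diff_derivable.
Qed.

Lemma HD_mul f g p X a c : HD f p X a -> HD g p X c ->
  HD (fun q => f q * g q) p X (f p * c + g p * a).
Proof.
move=> [df ha] [dg hc]; split; first exact: differentiableM.
rewrite -ha -hc; apply: deriveM; exact: diff_derivable.
Qed.

Lemma HD_scale k f p X a : HD f p X a -> HD (fun q => k * f q) p X (k * a).
Proof.
move=> h; have := HD_mul (HD_cst k p X) h; rewrite mulr0 addr0; exact.
Qed.

Lemma HD_opp f p X a : HD f p X a -> HD (fun q => - f q) p X (- a).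
Proof.
move=> h; have := HD_scale (-1) h; rewrite mulN1r.
have -> : (fun q => -1 * f q) = (fun q => - f q) by apply: funext => q; rewrite mulN1r.
exact.
Qed.

Lemma HD_sub f g p X a c : HD f p X a -> HD g p X c -> HD (fun q => f q - g q) p X (a - c).
Proof. by move=> hf hg; apply: HD_add => //; exact: HD_opp. Qed.

Lemma HD_inv f p X a : f p != 0 -> HD f p X a ->
  HD (fun q => (f q)^-1) p X (- a / (f p ^+ 2)).
Proof.
move=> nz [df ha]; split; first exact: differentiableV.
rewrite deriveV //; last exact: diff_derivable.
rewrite ha -exprVn /= mulrC; change (- (f p)^-1 ^+ 2 * a = (f p)^-1 ^+ 2 * - a); by rewrite mulNr mulrN.
Qed.

Lemma HD_sum (I : Type) (r : seq I) (F : I -> V -> R) (d : I -> R) p X :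
  (forall i, HD (F i) p X (d i)) -> HD (fun q => \sum_(i <- r) F i q) p X (\sum_(i <- r) d i).
Proof.
move=> hF; elim: r => [|i r IH].
  have -> : (fun q => \sum_(i <- [::]) F i q) = (fun _ => 0).
    by apply: funext => q; rewrite big_nil.
  by rewrite big_nil; exact: HD_cst.
have -> : (fun q => \sum_(j <- i :: r) F j q) = (fun q => F i q + \sum_(j <- r) F j q).
  by apply: funext => q; rewrite big_cons.
rewrite big_cons; exact: HD_add.
Qed.

Lemma HD_eq f p X a b : HD f p X a -> a = b -> HD f p X b.
Proof. by move=> h <-. Qed.

Lemma HD_ext f g p X a : (forall q, f q = g q) -> HD f p X a -> HD g p X a.
Proof. by move=> e; have -> : f = g by apply: funext. Qed.

End HDdef.

Section Coords.
Variables (R : realType) (n : nat).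
Local Notation pt := (pt R n).

Lemma fst_cont : continuous (fun q : pt => q.1).
Proof. by move=> x; exact: cvg_fst. Qed.
Lemma snd_cont : continuous (fun q : pt => q.2).
Proof. by move=> x; exact: cvg_snd. Qed.

Definition c1 (j : 'I_n.+1) (q : pt) : R := q.1 0 j.
Definition c2 (j : 'I_n.+1) (q : pt) : R := q.2 0 j.

Lemma c1_lin j : linear (c1 j).
Proof. by move=> a u v; rewrite /c1 /= !mxE. Qed.
Lemma c2_lin j : linear (c2 j).
Proof. by move=> a u v; rewrite /c2 /= !mxE. Qed.

Lemma c1_cont j : continuous (c1 j).
Proof.
move=> x; apply: (continuous_comp (f := fun q : pt => q.1) (g := fun M : 'rV[R]_n.+1 => M 0 j)).
  exact: fst_cont.
exact: coord_continuous.
Qed.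
Lemma c2_cont j : continuous (c2 j).
Proof.
move=> x; apply: (continuous_comp (f := fun q : pt => q.2) (g := fun M : 'rV[R]_n.+1 => M 0 j)).
  exact: snd_cont.
exact: coord_continuous.
Qed.

Lemma lin_diff (f : pt -> R) (hl : linear f) (hc : continuous f) p :
  differentiable f p /\ forall v, derive f p v = f v.
Proof.
pose L : {linear pt -> R} := HB.pack f (GRing.isLinear.Build _ _ _ _ _ hl).
have hcL : continuous (L : pt -> R) by move=> x; exact: hc.
have dL : differentiable (L : pt -> R) p by apply: linear_differentiable.
split => // v; rewrite deriveE //.
by rewrite (diff_lin p hcL).
Qed.

Lemma c1_diff j p : differentiable (c1 j) p /\ forall v, derive (c1 j) p v = c1 j v.
Proof. apply: lin_diff; [exact: c1_lin | move=> x; exact: c1_cont]. Qed.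
Lemma c2_diff j p : differentiable (c2 j) p /\ forall v, derive (c2 j) p v = c2 j v.
Proof. apply: lin_diff; [exact: c2_lin | move=> x; exact: c2_cont]. Qed.

Lemma diff_of_comps (F : pt -> pt) p :
  (forall j, differentiable (fun q => (F q).1 0 j) p /\ differentiable (fun q => (F q).2 0 j) p) ->
  differentiable F p.
Proof.
move=> hF.
have E : F = fun q => ((\sum_(j < n.+1) (fun q => (F q).1 0 j *: delta_mx 0 j)) q,
                      (\sum_(j < n.+1) (fun q => (F q).2 0 j *: delta_mx 0 j)) q).
  apply: funext => q; rewrite !fct_sumE.
  by rewrite -!row_sum_delta; case: (F q).
rewrite E; apply: differentiable_pair; apply: differentiable_sum => j;
  apply: differentiableZl; have [h1 h2] := hF j; by [].
Qed.

Lemma comp_derive1 (F : pt -> pt) p v j : differentiable F p ->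
  derive (fun q => (F q).1 0 j) p v = (derive F p v).1 0 j.
Proof.
move=> dF.
have [dc hc] := c1_diff j (F p).
have -> : (fun q => (F q).1 0 j) = c1 j \o F by [].
rewrite deriveE; last exact: differentiable_comp.
rewrite diff_comp // /= -deriveE // hc deriveE //.
Qed.

Lemma comp_derive2 (F : pt -> pt) p v j : differentiable F p ->
  derive (fun q => (F q).2 0 j) p v = (derive F p v).2 0 j.
Proof.
move=> dF.
have [dc hc] := c2_diff j (F p).
have -> : (fun q => (F q).2 0 j) = c2 j \o F by [].
rewrite deriveE; last exact: differentiable_comp.
rewrite diff_comp // /= -deriveE // hc deriveE //.
Qed.

Lemma bridge k (U : set pt) (F : pt -> pt) : open U ->
  (forall j, SS k.+1 U (fun q => (F q).1 0 j) /\ SS k.+1 U (fun q => (F q).2 0 j)) ->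
  Ck k U F.
Proof.
move=> oU; elim: k F => [|k IH] F hF.
  move=> p Up /=; apply: differentiable_continuous; apply: diff_of_comps => j.
  by have [h1 h2] := hF j; split; apply: (SS_diff (k := 0%N) _ Up).
have dF : forall p, U p -> differentiable F p.
  move=> p Up; apply: diff_of_comps => j.
  by have [h1 h2] := hF j; split; apply: (SS_diff (k := k.+1) _ Up).
split => // v; apply: IH => j; have [[_ h1] [_ h2]] := hF j; split.
  apply: (@SS_ext R _ k.+1 U _ (fun q => (derive F q v).1 0 j) oU _ (h1 v)) => q Uq; exact: comp_derive1 (dF q Uq).
apply: (@SS_ext R _ k.+1 U _ (fun q => (derive F q v).2 0 j) oU _ (h2 v)) => q Uq; exact: comp_derive2 (dF q Uq).
Qed.

Definition e1 (j : 'I_n.+1) : pt := (delta_mx 0 j, 0).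
Definition e2 (j : 'I_n.+1) : pt := (0, delta_mx 0 j).

Lemma pt_decomp (q : pt) : q = \sum_(j < n.+1) (c1 j q *: e1 j + c2 j q *: e2 j).
Proof.
have h1 : forall (F : 'I_n.+1 -> pt), (\sum_(j < n.+1) F j).1 = \sum_(j < n.+1) (F j).1.
  by move=> F; apply: (big_morph (fun x : pt => x.1)).
have h2 : forall (F : 'I_n.+1 -> pt), (\sum_(j < n.+1) F j).2 = \sum_(j < n.+1) (F j).2.
  by move=> F; apply: (big_morph (fun x : pt => x.2)).
case: q => [q1 q2]; apply: injective_projections => /=.
  rewrite h1 /= {1}(row_sum_delta q1); apply: eq_bigr => j _.
  by rewrite /c1 /e1 /= scaler0 addr0.
rewrite h2 /= {1}(row_sum_delta q2); apply: eq_bigr => j _.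
by rewrite /c2 /e2 /= scaler0 add0r.
Qed.

Lemma lin_pt (f : pt -> R) : linear f ->
  (forall p, differentiable f p) /\ (forall p v, derive f p v = f v).
Proof.
move=> hl.
pose L : {linear pt -> R} := HB.pack f (GRing.isLinear.Build _ _ _ _ _ hl).
have E : forall q, f q = \sum_(j < n.+1) (c1 j q * f (e1 j) + c2 j q * f (e2 j)).
  move=> q; rewrite {1}(pt_decomp q).
  have -> : f (\sum_(j < n.+1) (c1 j q *: e1 j + c2 j q *: e2 j)) =
            L (\sum_(j < n.+1) (c1 j q *: e1 j + c2 j q *: e2 j)) by [].
  rewrite linear_sum; apply: eq_bigr => j _.
  by rewrite linearD !linearZ.
have df : forall p, differentiable f p.
  move=> p.
  have := @HD_sum R pt _ (index_enum 'I_n.+1)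
     (fun j q => c1 j q * f (e1 j) + c2 j q * f (e2 j))
     (fun j => c1 j p * 0 + f (e1 j) * c1 j 0 + (c2 j p * 0 + f (e2 j) * c2 j 0)) p 0.
  case.
    move=> j; apply: HD_add; apply: HD_mul; try exact: HD_cst;
      [have [d1 h1] := c1_diff j p | have [d1 h1] := c2_diff j p]; by split.
  move=> d _; have -> : f = (fun q => \sum_(i <- index_enum 'I_n.+1)
     (c1 i q * f (e1 i) + c2 i q * f (e2 i))) by apply: funext => q; rewrite E.
  exact: d.
split => // p v.
have hc : continuous f by move=> x; apply: differentiable_continuous.
by have [_ ->] := lin_diff hl hc p.
Qed.

End Coords.

Section Alg.
Variables (R : realType) (n : nat).
Local Notation pt := (pt R n).
Local Notation dotv := (@dotv R n).

Lemma dotvC u v : dotv u v = dotv v u.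
Proof. by rewrite /Defs.dotv; apply: eq_bigr => j _; rewrite mulrC. Qed.
Lemma dotvDl u v w : dotv (u + v) w = dotv u w + dotv v w.
Proof. by rewrite /Defs.dotv -big_split; apply: eq_bigr => j _; rewrite mxE mulrDl. Qed.
Lemma dotvDr u v w : dotv w (u + v) = dotv w u + dotv w v.
Proof. by rewrite dotvC dotvDl !(dotvC w). Qed.
Lemma dotvZl a u w : dotv (a *: u) w = a * dotv u w.
Proof. by rewrite /Defs.dotv mulr_sumr; apply: eq_bigr => j _; rewrite mxE mulrA. Qed.
Lemma dotvZr a u w : dotv w (a *: u) = a * dotv w u.
Proof. by rewrite dotvC dotvZl dotvC. Qed.
Lemma dotvNl u w : dotv (- u) w = - dotv u w.
Proof. by rewrite -scaleN1r dotvZl mulN1r. Qed.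
Lemma dotvNr u w : dotv w (- u) = - dotv w u.
Proof. by rewrite dotvC dotvNl dotvC. Qed.
Lemma dotvBl u v w : dotv (u - v) w = dotv u w - dotv v w.
Proof. by rewrite dotvDl dotvNl. Qed.
Lemma dotvBr u v w : dotv w (u - v) = dotv w u - dotv w v.
Proof. by rewrite dotvDr dotvNr. Qed.

Definition H1 (u v : pt) : R := dotv u.1 v.1 + dotv u.2 v.2.
Definition H2 (u v : pt) : R := dotv u.2 v.1 - dotv u.1 v.2.

Lemma H1C u v : H1 v u = H1 u v.
Proof. by rewrite /H1 dotvC (dotvC v.2). Qed.
Lemma H2C u v : H2 v u = - H2 u v.
Proof. rewrite /H2 dotvC (dotvC v.1); ring. Qed.
Lemma H2uu u : H2 u u = 0.
Proof. by rewrite /H2 dotvC subrr. Qed.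
Lemma H1Dl u v w : H1 (u + v) w = H1 u w + H1 v w.
Proof. rewrite /H1 /= !dotvDl; ring. Qed.
Lemma H2Dl u v w : H2 (u + v) w = H2 u w + H2 v w.
Proof. rewrite /H2 /= !dotvDl; ring. Qed.
Lemma H1Dr u v w : H1 w (u + v) = H1 w u + H1 w v.
Proof. by rewrite !(H1C _ w) H1Dl. Qed.
Lemma H2Dr u v w : H2 w (u + v) = H2 w u + H2 w v.
Proof. rewrite !(H2C _ w) H2Dl; ring. Qed.
Lemma H1Sl c u v : H1 (cscale c u) v = c.1 * H1 u v - c.2 * H2 u v.
Proof. rewrite /H1 /H2 /cscale /= dotvBl !dotvDl !dotvZl; ring. Qed.
Lemma H2Sl c u v : H2 (cscale c u) v = c.1 * H2 u v + c.2 * H1 u v.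
Proof. rewrite /H1 /H2 /cscale /= dotvBl !dotvDl !dotvZl; ring. Qed.
Lemma H1Sr c u v : H1 u (cscale c v) = c.1 * H1 u v + c.2 * H2 u v.
Proof. rewrite H1C H1Sl H1C (H2C u); ring. Qed.
Lemma H2Sr c u v : H2 u (cscale c v) = c.1 * H2 u v - c.2 * H1 u v.
Proof. rewrite H2C H2Sl H1C (H2C u); ring. Qed.
Lemma H1J u v : H1 (JR u) v = H2 u v.
Proof. rewrite /H1 /H2 /JR /= dotvNl; ring. Qed.
Lemma H2J u v : H2 (JR u) v = - H1 u v.
Proof. rewrite /H1 /H2 /JR /= dotvNl; ring. Qed.

Lemma sqnE p : sqn p = H1 p p.
Proof. by []. Qed.

Lemma cdotbarE b z : cdotbar b z = (H1 z b, H2 z b).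
Proof.
rewrite /cdotbar.
have -> : \big[@cadd R/(0, 0)]_(j < n.+1) cmul (b.1 0 j, - b.2 0 j) (z.1 0 j, z.2 0 j) =
  (\sum_(j < n.+1) (cmul (b.1 0 j, - b.2 0 j) (z.1 0 j, z.2 0 j)).1,
   \sum_(j < n.+1) (cmul (b.1 0 j, - b.2 0 j) (z.1 0 j, z.2 0 j)).2).
  elim/big_rec3: _ => //= j x y1 y2 _ ->.
  by rewrite /cadd.
rewrite /H1 /H2 /Defs.dotv /cmul /=; congr (_, _).
  rewrite -big_split /=; apply: eq_bigr => j _; ring.
rewrite -sumrN -big_split /=; apply: eq_bigr => j _; ring.
Qed.

End Alg.

Section Cs.
Variables (R : realType) (n : nat).
Local Notation pt := (pt R n).
Lemma pt_ext (u v : pt) : (forall j, u.1 0 j = v.1 0 j) -> (forall j, u.2 0 j = v.2 0 j) -> u = v.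
Proof.
case: u v => [u1 u2] [v1 v2] /= h1 h2.
by congr (_, _); apply/rowP => j; [exact: h1 | exact: h2].
Qed.
Lemma H1Nr (u v : pt) : H1 u (- v) = - H1 u v.
Proof. rewrite /H1 /= !dotvNr; ring. Qed.
Lemma H2Nr (u v : pt) : H2 u (- v) = - H2 u v.
Proof. rewrite /H2 /= !dotvNr; ring. Qed.
Lemma H1Nl (u v : pt) : H1 (- u) v = - H1 u v.
Proof. rewrite /H1 /= !dotvNl; ring. Qed.
Lemma sqnN (u : pt) : sqn (- u) = sqn u.
Proof. by rewrite !sqnE H1Nl H1Nr opprK. Qed.
End Cs.

Ltac hexp := do 3 (rewrite ?H1Dl ?H1Dr ?H2Dl ?H2Dr ?H1Sl ?H1Sr ?H2Sl ?H2Sr /=).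

Section PhiSec.
Variables (R : realType) (n : nat) (b : pt R n).
Hypothesis hb : sqn b < 1.
Local Notation pt := (pt R n).

Definition sb := Num.sqrt (1 - sqn b).
Lemma sb_gt0 : 0 < sb.
Proof. by rewrite /sb sqrtr_gt0 subr_gt0. Qed.
Lemma sb_sq : sb ^+ 2 = 1 - sqn b.
Proof. by rewrite /sb sqr_sqrtr // subr_ge0 ltW. Qed.
Lemma sqnbE : sqn b = 1 - sb ^+ 2.
Proof. rewrite sb_sq; ring. Qed.

Definition w1 (q : pt) := 1 + H1 q b.
Definition w2 (q : pt) := H2 q b.
Definition Nq (q : pt) := w1 q ^+ 2 + w2 q ^+ 2.
Definition A1 (q : pt) := sb * (w1 q / Nq q).
Definition A2 (q : pt) := - (sb * (w2 q / Nq q)).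
Definition B1 (q : pt) := (1 + A1 q) / (1 + sb).
Definition B2 (q : pt) := A2 q / (1 + sb).

Lemma PhiE q : Phi b q = cscale (A1 q, A2 q) q + cscale (B1 q, B2 q) b.
Proof.
rewrite /Phi -/sb cdotbarE /cadd /creal /cmul /cinv /=.
rewrite /A1 /A2 /B1 /B2 /Nq /w1 /w2 !add0r !mul0r !subr0 !addr0.
congr (cscale (_, _) _ + cscale (_, _) _).
all: rewrite /A1 /A2 /Nq /w1 /w2; ring.
Qed.

Lemma comp1E q j : (Phi b q).1 0 j =
  A1 q * c1 j q - A2 q * c2 j q + (B1 q * b.1 0 j - B2 q * b.2 0 j).
Proof. by rewrite PhiE /cscale /= !mxE. Qed.
Lemma comp2E q j : (Phi b q).2 0 j =
  A1 q * c2 j q + A2 q * c1 j q + (B1 q * b.2 0 j + B2 q * b.1 0 j).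
Proof. by rewrite PhiE /cscale /= !mxE. Qed.

Lemma H1Zl (a : R) (x u : pt) : H1 (a *: x) u = a * H1 x u.
Proof. rewrite /H1 /= !dotvZl; ring. Qed.
Lemma H2Zl (a : R) (x u : pt) : H2 (a *: x) u = a * H2 x u.
Proof. rewrite /H2 /= !dotvZl; ring. Qed.
Lemma lin_H1 (u : pt) : linear (fun q : pt => H1 q u).
Proof. by move=> a x y; rewrite H1Dl H1Zl. Qed.
Lemma lin_H2 (u : pt) : linear (fun q : pt => H2 q u).
Proof. by move=> a x y; rewrite H2Dl H2Zl. Qed.

Lemma SS_linpt k (U : set pt) f : linear f -> SS k U f.
Proof.
move=> hl; have [df dv] := lin_pt hl; apply: SS_lin => // v.
by exists (f v) => q; rewrite dv.
Qed.

Lemma HD_lin (f : pt -> R) p X : linear f -> HD f p X (f X).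
Proof. by move=> hl; have [d e] := lin_pt hl; split; [exact: d | exact: e]. Qed.

Definition Ub : set pt := [set q | 0 < w1 q].

Lemma w1_diff p : differentiable w1 p.
Proof.
by have [d _] := HD_add (HD_cst 1 p p) (HD_lin p p (lin_H1 b)).
Qed.

Lemma Ub_open : open Ub.
Proof.
have -> : Ub = w1 @^-1` [set x | x > 0] by [].
apply: open_comp; last exact: open_gt.
move=> x _; apply: differentiable_continuous; exact: w1_diff.
Qed.

Lemma Nq_gt0 q : Ub q -> 0 < Nq q.
Proof.
rewrite /Ub /Nq /= => h; have := sqr_ge0 (w2 q); have := exprn_gt0 2 h; lra.
Qed.

Lemma SS_comps k j : SS k Ub (fun q => (Phi b q).1 0 j) /\ SS k Ub (fun q => (Phi b q).2 0 j).
Proof.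
have oU := Ub_open.
have sw1 : SS k Ub w1 by apply: SS_add => //; [exact: SS_cst | exact: SS_linpt (lin_H1 b)].
have sw2 : SS k Ub w2 by exact: SS_linpt (lin_H2 b).
have sN : SS k Ub Nq by apply: SS_add => //; rewrite /GRing.exp /=; apply: SS_mul.
have sNi : SS k Ub (fun q => (Nq q)^-1).
  by apply: SS_inv => // q /Nq_gt0 /lt0r_neq0.
have sA1 : SS k Ub A1 by apply: SS_scale => //; apply: SS_mul.
have sA2 : SS k Ub A2 by apply: SS_opp => //; apply: SS_scale => //; apply: SS_mul.
have sB1 : SS k Ub B1 by apply: SS_mul => //; [apply: SS_add => //; exact: SS_cst | exact: SS_cst].
have sB2 : SS k Ub B2 by apply: SS_mul => //; exact: SS_cst.
have sc1 : forall j, SS k Ub (c1 j) by move=> i; exact: SS_linpt (c1_lin i).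
have sc2 : forall j, SS k Ub (c2 j) by move=> i; exact: SS_linpt (c2_lin i).
split.
  apply: (SS_ext (f := fun q => A1 q * c1 j q - A2 q * c2 j q + (B1 q * b.1 0 j - B2 q * b.2 0 j))) => //.
    by move=> q _; rewrite comp1E.
  by apply: SS_add => //; apply: SS_sub => //; apply: SS_mul => //; exact: SS_cst.
apply: (SS_ext (f := fun q => A1 q * c2 j q + A2 q * c1 j q + (B1 q * b.2 0 j + B2 q * b.1 0 j))) => //.
  by move=> q _; rewrite comp2E.
by apply: SS_add => //; apply: SS_add => //; apply: SS_mul => //; exact: SS_cst.
Qed.

Lemma Phi_smooth : smooth_on Ub (Phi b).
Proof.
move=> k; apply: bridge; first exact: Ub_open.
move=> j; exact: SS_comps.
Qed.

Lemma dotv_ge0 (u : 'rV[R]_n.+1) : 0 <= dotv u u.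
Proof. by rewrite /Defs.dotv; apply: sumr_ge0 => j _; rewrite -expr2 sqr_ge0. Qed.
Lemma sqn_ge0 (q : pt) : 0 <= sqn q.
Proof. by rewrite /sqn; apply: addr_ge0; exact: dotv_ge0. Qed.

Lemma ball_Ub q : sqn q <= 1 -> Ub q.
Proof.
move=> hq; rewrite /Ub /w1 /=.
have := sqn_ge0 (q + b); rewrite sqnE H1Dl !H1Dr (H1C q b) -!sqnE; have := hb; lra.
Qed.

Lemma Nq_neq0 q : Ub q -> Nq q != 0.
Proof. by move=> /Nq_gt0 /lt0r_neq0. Qed.

Lemma sqn_Phi q : Ub q -> sqn (Phi b q) = 1 - sb ^+ 2 / Nq q * (1 - sqn q).
Proof.
move=> Uq; have nz := Nq_neq0 Uq.
have s1 : 1 + sb != 0 by apply: lt0r_neq0; have := sb_gt0; lra.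
rewrite PhiE sqnE; hexp.
rewrite (H1C q b) (H2C q b) !H2uu -!sqnE sqnbE.
move: nz; rewrite /B1 /B2 /A1 /A2 /Nq /w1 /w2 => nz.
field; by rewrite nz s1.
Qed.

Definition dA1 (p X : pt) :=
  - sb * (H1 X b * (w1 p ^+ 2 - w2 p ^+ 2) + 2 * H2 X b * w1 p * w2 p) / Nq p ^+ 2.
Definition dA2 (p X : pt) :=
  - sb * (H2 X b * (w1 p ^+ 2 - w2 p ^+ 2) - 2 * H1 X b * w1 p * w2 p) / Nq p ^+ 2.
Definition dB1 p X := dA1 p X / (1 + sb).
Definition dB2 p X := dA2 p X / (1 + sb).

Lemma s1_neq0 : 1 + sb != 0.
Proof. by apply: lt0r_neq0; have := sb_gt0; lra. Qed.

Lemma HD_w1 p X : HD w1 p X (H1 X b).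
Proof. apply: HD_eq; first exact: (HD_add (HD_cst 1 p X) (HD_lin p X (lin_H1 b))). by rewrite add0r. Qed.
Lemma HD_w2 p X : HD w2 p X (H2 X b).
Proof. exact: (HD_lin p X (lin_H2 b)). Qed.
Lemma HD_Nq p X : HD Nq p X (2 * (w1 p * H1 X b + w2 p * H2 X b)).
Proof.
apply: HD_eq.
  rewrite /Nq /GRing.exp /=.
  exact: (HD_add (HD_mul (HD_w1 p X) (HD_w1 p X)) (HD_mul (HD_w2 p X) (HD_w2 p X))).
ring.
Qed.
Lemma HD_A1 p X : Ub p -> HD A1 p X (dA1 p X).
Proof.
move=> Up; have nz := Nq_neq0 Up.
apply: HD_eq.
  exact: (HD_scale sb (HD_mul (HD_w1 p X) (HD_inv nz (HD_Nq p X)))).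
move: nz; rewrite /dA1 /Nq => nz; field; by rewrite nz.
Qed.
Lemma HD_A2 p X : Ub p -> HD A2 p X (dA2 p X).
Proof.
move=> Up; have nz := Nq_neq0 Up.
apply: HD_eq.
  exact: (HD_opp (HD_scale sb (HD_mul (HD_w2 p X) (HD_inv nz (HD_Nq p X))))).
move: nz; rewrite /dA2 /Nq => nz; field; by rewrite nz.
Qed.
Lemma HD_B1 p X : Ub p -> HD B1 p X (dB1 p X).
Proof.
move=> Up; apply: HD_eq.
  exact: (HD_mul (HD_add (HD_cst 1 p X) (HD_A1 X Up)) (HD_cst (1 + sb)^-1 p X)).
rewrite /dB1; ring.
Qed.
Lemma HD_B2 p X : Ub p -> HD B2 p X (dB2 p X).
Proof.
move=> Up; apply: HD_eq.
  exact: (HD_mul (HD_A2 X Up) (HD_cst (1 + sb)^-1 p X)).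
rewrite /dB2; ring.
Qed.

Lemma HD_c1 (j : 'I_n.+1) (p X : pt) : HD (c1 j) p X (c1 j X).
Proof. by have [d e] := c1_diff j p; split; [exact: d | exact: e]. Qed.
Lemma HD_c2 (j : 'I_n.+1) (p X : pt) : HD (c2 j) p X (c2 j X).
Proof. by have [d e] := c2_diff j p; split; [exact: d | exact: e]. Qed.

Lemma HD_comp1 p X j : Ub p -> HD (fun q => (Phi b q).1 0 j) p X
  (dA1 p X * c1 j p + A1 p * c1 j X - (dA2 p X * c2 j p + A2 p * c2 j X)
   + (dB1 p X * b.1 0 j - dB2 p X * b.2 0 j)).
Proof.
move=> Up; apply: (HD_ext (f := fun q => A1 q * c1 j q - A2 q * c2 j q + (B1 q * b.1 0 j - B2 q * b.2 0 j))).
  by move=> q; rewrite comp1E.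
apply: HD_eq.
  apply: HD_add; (apply: HD_sub; [apply: HD_mul| apply: HD_mul]);
  by [apply: HD_A1|apply: HD_A2|apply: HD_B1|apply: HD_B2|apply: HD_c1|apply: HD_c2|apply: HD_cst].
rewrite /=; ring.
Qed.

Lemma HD_comp2 p X j : Ub p -> HD (fun q => (Phi b q).2 0 j) p X
  (dA1 p X * c2 j p + A1 p * c2 j X + (dA2 p X * c1 j p + A2 p * c1 j X)
   + (dB1 p X * b.2 0 j + dB2 p X * b.1 0 j)).
Proof.
move=> Up; apply: (HD_ext (f := fun q => A1 q * c2 j q + A2 q * c1 j q + (B1 q * b.2 0 j + B2 q * b.1 0 j))).
  by move=> q; rewrite comp2E.
apply: HD_eq.
  apply: HD_add; (apply: HD_add; [apply: HD_mul| apply: HD_mul]);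
  by [apply: HD_A1|apply: HD_A2|apply: HD_B1|apply: HD_B2|apply: HD_c1|apply: HD_c2|apply: HD_cst].
rewrite /=; ring.
Qed.

Lemma Phi_diff p : Ub p -> differentiable (Phi b) p.
Proof.
move=> Up; apply: diff_of_comps => j; split.
  by have [d _] := HD_comp1 p j Up.
by have [d _] := HD_comp2 p j Up.
Qed.

Lemma DPhi p X : Ub p -> 'd (Phi b) p X =
  cscale (dA1 p X, dA2 p X) p + cscale (A1 p, A2 p) X + cscale (dB1 p X, dB2 p X) b.
Proof.
move=> Up; have dP := Phi_diff Up.
rewrite -deriveE //; apply: pt_ext => j.
  rewrite -comp_derive1 //; have [_ ->] := HD_comp1 X j Up.
  by rewrite /cscale /c1 /c2 /= !mxE; ring.
rewrite -comp_derive2 //; have [_ ->] := HD_comp2 X j Up.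
by rewrite /cscale /c1 /c2 /= !mxE; ring.
Qed.

Lemma Phi_hol p X : Ub p -> JR ('d (Phi b) p X) = 'd (Phi b) p (JR X).
Proof.
move=> Up; rewrite !DPhi //.
rewrite /dB1 /dB2 /dA1 /dA2 !H1J !H2J.
by apply: pt_ext => j; rewrite /JR /cscale /= !mxE; ring.
Qed.

Lemma WbE q : Wb b q = sb ^+ 2 / Nq q.
Proof.
rewrite /Wb sb_sq /Nq /w1 /w2 /sqn /H1 /H2 (dotvC b.1) (dotvC b.2) (dotvC b.2 q.1) (dotvC b.1 q.2).
congr (_ / _); ring.
Qed.

Lemma drE (q X : pt) : dr q X = H1 q X / rr q.
Proof. by []. Qed.
Lemma thetaE (q X : pt) : theta q X = H2 X q / sqn q.
Proof.
rewrite /theta /rr sqr_sqrtr ?sqn_ge0 //; congr (_ / _).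
by rewrite /H2 (dotvC X.2) (dotvC X.1).
Qed.

Lemma rr1 (q : pt) : sqn q = 1 -> rr q = 1.
Proof. by rewrite /rr => ->; rewrite sqrtr1. Qed.

Lemma sph_Ub p : usphere p -> Ub p.
Proof. by rewrite /usphere /= => h; apply: ball_Ub; rewrite h. Qed.

Lemma sqn_Phi_sph p : usphere p -> sqn (Phi b p) = 1.
Proof.
move=> h; rewrite sqn_Phi; last exact: sph_Ub.
by move: h; rewrite /usphere /= => ->; rewrite subrr mulr0 subr0.
Qed.

Lemma part2a p X : usphere p ->
  pull1 (Phi b) (@dr R n) p X = Wb b p * dr p X.
Proof.
move=> hp; have Up := sph_Ub hp; have nz := Nq_neq0 Up; have s1 := s1_neq0.
have hs : sqn p = 1 by exact: hp.
rewrite /pull1 !drE (rr1 (sqn_Phi_sph hp)) (rr1 hs).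
rewrite !divr1 WbE DPhi // PhiE; hexp.
rewrite ?(H1C p b) ?(H2C p b) ?(H1C X b) ?(H2C X b) ?(H1C X p) ?(H2C X p) ?H2uu -?sqnE.
rewrite hs sqnbE.
move: nz; rewrite /B1 /B2 /A1 /A2 /dB1 /dB2 /dA1 /dA2 /Nq /w1 /w2 => nz.
field; by rewrite nz s1.
Qed.

Lemma part2b p X : usphere p ->
  pull1 (Phi b) (@theta R n) p X = Wb b p * theta p X.
Proof.
move=> hp; have Up := sph_Ub hp; have nz := Nq_neq0 Up; have s1 := s1_neq0.
have hs : sqn p = 1 by exact: hp.
rewrite /pull1 !thetaE (sqn_Phi_sph hp) hs.
rewrite !divr1 WbE DPhi // PhiE; hexp.
rewrite ?(H1C p b) ?(H2C p b) ?(H1C X b) ?(H2C X b) ?(H1C X p) ?(H2C X p) ?H2uu -?sqnE.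
rewrite hs sqnbE.
move: nz; rewrite /B1 /B2 /A1 /A2 /dB1 /dB2 /dA1 /dA2 /Nq /w1 /w2 => nz.
field; by rewrite nz s1.
Qed.

Lemma H2Zr (a : R) (x u : pt) : H2 u (a *: x) = a * H2 u x.
Proof. rewrite /H2 /= !dotvZr; ring. Qed.
Lemma lin_H2r (u : pt) : linear (fun q : pt => H2 u q).
Proof. by move=> a x y; rewrite H2Dr H2Zr. Qed.

Lemma HD_sqn (q X : pt) : HD (@sqn R n) q X (2 * H1 q X).
Proof.
have E : forall r : pt, sqn r = \sum_(j <- index_enum 'I_n.+1) (c1 j r * c1 j r + c2 j r * c2 j r).
  by move=> r; rewrite /sqn /Defs.dotv -big_split.
apply: (HD_ext (f := fun r => \sum_(j <- index_enum 'I_n.+1) (c1 j r * c1 j r + c2 j r * c2 j r))).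
  by move=> r; rewrite E.
apply: HD_eq.
  by apply: HD_sum => j; apply: HD_add; apply: HD_mul; [apply: HD_c1|apply: HD_c1|apply: HD_c2|apply: HD_c2].
rewrite /H1 /Defs.dotv mulrDr !mulr_sumr -big_split /=; apply: eq_bigr => j _.
rewrite /c1 /c2; ring.
Qed.

Lemma HD_theta (q X Y : pt) : sqn q != 0 ->
  HD (fun r => theta r Y) q X (H2 Y X / sqn q - H2 Y q * (2 * H1 q X) / sqn q ^+ 2).
Proof.
move=> nz.
apply: (HD_ext (f := fun r => H2 Y r * (sqn r)^-1)); first by move=> r; rewrite thetaE.
apply: HD_eq; first exact: (HD_mul (HD_lin q X (lin_H2r Y)) (HD_inv nz (HD_sqn q X))).
rewrite /=; field; exact: nz.
Qed.

Lemma HD_Wb p X : Ub p ->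
  HD (Wb b) p X (sb ^+ 2 * (- (2 * (w1 p * H1 X b + w2 p * H2 X b)) / Nq p ^+ 2)).
Proof.
move=> Up; have nz := Nq_neq0 Up.
apply: (HD_ext (f := fun r => sb ^+ 2 * (Nq r)^-1)); first by move=> r; rewrite WbE.
exact: (HD_scale (sb ^+ 2) (HD_inv nz (HD_Nq p X))).
Qed.

Lemma part3 p X Y : usphere p ->
  pull2 (Phi b) (dform1 (@theta R n)) p X Y =
          Wb b p * dform1 (@theta R n) p X Y
          + 2 * (Wb b p - Wb b p ^+ 2) * rr p * wedge (@dr R n) (@theta R n) p X Y
          + wedge (dfun (Wb b)) (@theta R n) p X Y
          + wedge (@dr R n) (fun q V => dfun (Wb b) q (JR V)) p X Y.
Proof.
move=> hp; have Up := sph_Ub hp; have nz := Nq_neq0 Up; have s1 := s1_neq0.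
have hs : sqn p = 1 by exact: hp.
have hsP := sqn_Phi_sph hp.
have nzP : sqn (Phi b p) != 0 by rewrite hsP oner_neq0.
have nzp : sqn p != 0 by rewrite hs oner_neq0.
rewrite /pull2 /dform1 /wedge /dfun.
have [_ ->] := HD_theta ('d (Phi b) p Y) ('d (Phi b) p X) nzP.
have [_ ->] := HD_theta ('d (Phi b) p X) ('d (Phi b) p Y) nzP.
have [_ ->] := HD_theta Y X nzp.
have [_ ->] := HD_theta X Y nzp.
have [_ ->] := HD_Wb X Up.
have [_ ->] := HD_Wb Y Up.
have [_ ->] := HD_Wb (JR X) Up.
have [_ ->] := HD_Wb (JR Y) Up.
rewrite !drE !thetaE hsP hs (rr1 hs) !H1J !H2J WbE !DPhi // PhiE; hexp.
rewrite ?(H1C p b) ?(H2C p b) ?(H1C X b) ?(H2C X b) ?(H1C Y b) ?(H2C Y b).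
rewrite ?(H1C X p) ?(H2C X p) ?(H1C Y p) ?(H2C Y p) ?(H1C X Y) ?(H2C X Y) ?H2uu -?sqnE.
rewrite hs sqnbE.
move: nz; rewrite /B1 /B2 /A1 /A2 /dB1 /dB2 /dA1 /dA2 /Nq /w1 /w2 => nz.
field; by rewrite nz s1.
Qed.

End PhiSec.

Lemma sbN (R : realType) n (b : pt R n) : sb (- b) = sb b.
Proof. by rewrite /sb sqnN. Qed.

Section Inv.
Variables (R : realType) (n : nat) (b : pt R n).
Hypothesis hb : sqn b < 1.
Local Notation pt := (pt R n).

Lemma w1N_Phi q : Ub b q -> w1 (- b) (Phi b q) = sb b ^+ 2 * w1 b q / Nq b q.
Proof.
move=> Uq; have nz := Nq_neq0 Uq.
have s1 : 1 + sb b != 0 by apply: lt0r_neq0; have := sb_gt0 hb; lra.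
rewrite /w1 H1Nr PhiE; hexp.
rewrite ?(H1C q b) ?(H2C q b) ?H2uu -?sqnE (sqnbE hb).
move: nz; rewrite /B1 /B2 /A1 /A2 /Nq /w1 /w2 => nz.
field; by rewrite nz s1.
Qed.

Lemma w2N_Phi q : Ub b q -> w2 (- b) (Phi b q) = - (sb b ^+ 2 * w2 b q / Nq b q).
Proof.
move=> Uq; have nz := Nq_neq0 Uq.
have s1 : 1 + sb b != 0 by apply: lt0r_neq0; have := sb_gt0 hb; lra.
rewrite /w2 H2Nr PhiE; hexp.
rewrite ?(H1C q b) ?(H2C q b) ?H2uu -?sqnE (sqnbE hb).
move: nz; rewrite /B1 /B2 /A1 /A2 /Nq /w1 /w2 => nz.
field; by rewrite nz s1.
Qed.

Lemma PhiK q : Ub b q -> Phi (- b) (Phi b q) = q.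
Proof.
move=> Uq; have nz := Nq_neq0 Uq.
have s0 : sb b != 0 by apply: lt0r_neq0; exact: sb_gt0.
have s1 : 1 + sb b != 0 by apply: lt0r_neq0; have := sb_gt0 hb; lra.
have eN : Nq (- b) (Phi b q) = sb b ^+ 4 / Nq b q.
  rewrite /Nq w1N_Phi // w2N_Phi //; move: nz; rewrite /Nq => nz; field; by rewrite nz.
have eA1 : A1 (- b) (Phi b q) = w1 b q / sb b.
  rewrite /A1 eN w1N_Phi // sbN; move: nz; rewrite /Nq => nz; field; by rewrite nz s0.
have eA2 : A2 (- b) (Phi b q) = w2 b q / sb b.
  rewrite /A2 eN w2N_Phi // sbN; move: nz; rewrite /Nq => nz; field; by rewrite nz s0.
have eB1 : B1 (- b) (Phi b q) = (1 + w1 b q / sb b) / (1 + sb b).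
  by rewrite /B1 eA1 sbN.
have eB2 : B2 (- b) (Phi b q) = (w2 b q / sb b) / (1 + sb b).
  by rewrite /B2 eA2 sbN.
apply: pt_ext => j.
  rewrite comp1E eA1 eA2 eB1 eB2 {1}/c1 {1}/c2 comp1E comp2E.
  move: nz; rewrite /B1 /B2 /A1 /A2 /Nq => nz.
  rewrite /c1 /c2 [(- b).1]/= [(- b).2]/= !mxE; field; by rewrite nz s0 s1.
rewrite comp2E eA1 eA2 eB1 eB2 {1}/c1 {1}/c2 comp1E comp2E.
move: nz; rewrite /B1 /B2 /A1 /A2 /Nq => nz.
rewrite /c1 /c2 [(- b).1]/= [(- b).2]/= !mxE; field; by rewrite nz s0 s1.
Qed.

End Inv.

Lemma Phi_ball (R : realType) (n : nat) (b : pt R n) : sqn b < 1 ->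
  forall p, uclosed_ball p -> uclosed_ball (Phi b p).
Proof.
move=> hb p hp; have Up := ball_Ub hb hp.
rewrite /uclosed_ball /= sqn_Phi //.
have hN := Nq_gt0 Up.
have : 0 <= sb b ^+ 2 / Nq b p * (1 - sqn p).
  apply: mulr_ge0; first by apply: divr_ge0; [exact: sqr_ge0 | exact: ltW].
  by rewrite subr_ge0; exact: hp.
lra.
Qed.

Unset Implicit Arguments.

Theorem proposition2p1 (R : realType) (n : nat) (b : pt R n) :
  sqn b < 1 ->
  exists Phibar : pt R n -> pt R n,
    (* extension of Phi_b from the open ball *)
    (forall z, uopen_ball z -> Phibar z = Phi b z) /\
    (* (1) J_R-holomorphic diffeomorphism of the closed ball *)
    uclosed_ball_diffeo Phibar /\
    (forall p, uclosed_ball p -> JR_holomorphic_at Phibar p) /\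
    (* (2) *)
    (forall p, usphere p -> forall X : pt R n,
        pull1 Phibar (@dr R n) p X = Wb b p * dr p X /\
        pull1 Phibar (@theta R n) p X = Wb b p * theta p X) /\
    (* (3) *)
    (forall p, usphere p -> forall X Y : pt R n,
        pull2 Phibar (dform1 (@theta R n)) p X Y =
          Wb b p * dform1 (@theta R n) p X Y
          + 2 * (Wb b p - Wb b p ^+ 2) * rr p * wedge (@dr R n) (@theta R n) p X Y
          + wedge (dfun (Wb b)) (@theta R n) p X Y
          + wedge (@dr R n) (fun q V => dfun (Wb b) q (JR V)) p X Y).
Proof.
move=> hb.
have hb' : sqn (- b) < 1 by rewrite sqnN.
exists (Phi b); split => //; split.
  split.
    exists (Ub b); split; first exact: Ub_open.
    split; first by move=> p hp; exact: ball_Ub.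
    exact: Phi_smooth.
  split; first exact: Phi_ball.
  exists (Phi (- b)); split.
    exists (Ub (- b)); split; first exact: Ub_open.
    split; first by move=> p hp; exact: ball_Ub.
    exact: Phi_smooth.
  split; first exact: Phi_ball.
  split; first by move=> p hp; apply: PhiK => //; exact: ball_Ub.
  move=> q hq; have := @PhiK R n (- b) hb' q (ball_Ub hb' hq).
  by rewrite opprK.
split; first by move=> p hp X; apply: Phi_hol => //; exact: ball_Ub.
split; first by move=> p hp X; split; [exact: part2a | exact: part2b].
by move=> p hp X Y; exact: part3.
Qed.
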